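(* There exists a constant $K>0$ such that for all $i\in\{1,\dots,6\}$ and all $(x,y)\in\mathcal D$, $$\max\big(|x_i(x,y)-z_i(x)|,\ |y_i(x,y)|\big)\le Ky .$$
   Context: Characterizing point: for any triangle (three points of the plane not all equal) there is a similitude mapping it onto a triangle with vertices $(0,0)$, $(1,0)$, $(x,y)$, $0\le x\le1/2$, $y\ge0$, sending its longest edge onto $[(0,0),(1,0)]$ and its shortest edge onto $[(0,0),(x,y)]$; $(x,y)$ is unique and is the characterizing point. $\mathcal D$ is the set of all characterizing points. For $(x,y)\in\mathcal D$ let $A=(0,0)$, $B=(x,y)$, $C=(1,0)$, $D,E,F$ the midpoints of $[A,B],[B,C],[C,A]$ and $G$ the barycenter of $ABC$; set $\mathcal T_1=\{A,D,G\}$, $\mathcal T_2=\{D,B,G\}$, $\mathcal T_3=\{B,E,G\}$, $\mathcal T_4=\{E,C,G\}$, $\mathcal T_5=\{C,F,G\}$, $\mathcal T_6=\{F,A,G\}$, and let $(x_i(x,y),y_i(x,y))$ be the characterizing point of $\mathcal T_i$. Define $z_i(x)=x_i(x,0)$ for $x\in[0,1/2]$. *)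

(* Defs.v *)
From Stdlib Require Import Reals Lra ClassicalEpsilon.
Open Scope R_scope.

Definition pt := (R * R)%type.

Definition dist (p q : pt) : R :=
  sqrt ((fst p - fst q) ^ 2 + (snd p - snd q) ^ 2).

Definition similitude (f : pt -> pt) : Prop :=
  exists k, 0 < k /\ forall p q, dist (f p) (f q) = k * dist p q.

Definition is_triangle (P Q S : pt) : Prop := ~ (P = Q /\ Q = S).

Definition is_perm3 (a b d P Q S : pt) : Prop :=
  (a = P /\ b = Q /\ d = S) \/ (a = P /\ b = S /\ d = Q) \/
  (a = Q /\ b = P /\ d = S) \/ (a = Q /\ b = S /\ d = P) \/
  (a = S /\ b = P /\ d = Q) \/ (a = S /\ b = Q /\ d = P).

Definition is_char_point (P Q S : pt) (c : pt) : Prop :=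
  0 <= fst c <= 1 / 2 /\ 0 <= snd c /\
  exists f : pt -> pt, similitude f /\
  exists a b d : pt, is_perm3 a b d P Q S /\
    f a = (0, 0) /\ f b = (1, 0) /\ f d = c /\
    dist a d <= dist a b /\ dist b d <= dist a b /\
    dist a d <= dist a b /\ dist a d <= dist b d.

(* The characterizing point (unique by the paper; chosen by epsilon). *)
Definition char_point (P Q S : pt) : pt :=
  epsilon (inhabits ((0, 0) : pt)) (is_char_point P Q S).

Definition in_D (c : pt) : Prop :=
  exists P Q S : pt, is_triangle P Q S /\ c = char_point P Q S.

Definition midpoint (p q : pt) : pt := ((fst p + fst q) / 2, (snd p + snd q) / 2).
Definition barycenter (p q s : pt) : pt :=
  ((fst p + fst q + fst s) / 3, (snd p + snd q + snd s) / 3).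

Definition subtri (i : nat) (x y : R) : pt * pt * pt :=
  let A : pt := (0, 0) in
  let B : pt := (x, y) in
  let C : pt := (1, 0) in
  let D := midpoint A B in
  let E := midpoint B C in
  let F := midpoint C A in
  let G := barycenter A B C in
  match i with
  | 1%nat => (A, D, G)
  | 2%nat => (D, B, G)
  | 3%nat => (B, E, G)
  | 4%nat => (E, C, G)
  | 5%nat => (C, F, G)
  | _ => (F, A, G)
  end.

Definition char_sub (i : nat) (x y : R) : pt :=
  match subtri i x y with (P, Q, T) => char_point P Q T end.

Definition x_i (i : nat) (x y : R) : R := fst (char_sub i x y).
Definition y_i (i : nat) (x y : R) : R := snd (char_sub i x y).
Definition z_i (i : nat) (x : R) : R := x_i i x 0.

(* Main.v *)
Require Import Defs.
From Stdlib Require Import Reals Lra Psatz ClassicalEpsilon.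
Open Scope R_scope.
Notation dist := Defs.dist.

Definition d2 (p q : pt) : R := (fst p - fst q)^2 + (snd p - snd q)^2.

Lemma d2_nonneg p q : 0 <= d2 p q.
Proof. unfold d2; pose proof (pow2_ge_0 (fst p - fst q)); pose proof (pow2_ge_0 (snd p - snd q)); lra. Qed.

Lemma d2_sym p q : d2 p q = d2 q p.
Proof. unfold d2; ring. Qed.

Lemma dist_sq p q : dist p q ^ 2 = d2 p q.
Proof. unfold dist. rewrite <- Rsqr_pow2. apply Rsqr_sqrt. apply d2_nonneg. Qed.

Lemma dist_nonneg p q : 0 <= dist p q.
Proof. apply sqrt_pos. Qed.

Lemma dist_le_d2 p q r s : dist p q <= dist r s -> d2 p q <= d2 r s.
Proof.
  intro H. rewrite <- !dist_sq. pose proof (dist_nonneg p q). nra.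
Qed.

Lemma d2_le_dist p q r s : d2 p q <= d2 r s -> dist p q <= dist r s.
Proof. intro H. unfold dist. apply sqrt_le_1_alt. exact H. Qed.

Definition cr (P Q S : pt) : R :=
  (fst Q - fst P) * (snd S - snd P) - (snd Q - snd P) * (fst S - fst P).

Definition Lm (P Q S : pt) := Rmax (Rmax (d2 P Q) (d2 Q S)) (d2 P S).
Definition Sm (P Q S : pt) := Rmin (Rmin (d2 P Q) (d2 Q S)) (d2 P S).
Definition Sg (P Q S : pt) := d2 P Q + d2 Q S + d2 P S.

Lemma char_spec P Q S c : is_char_point P Q S c ->
  fst c * Lm P Q S = (2 * Lm P Q S + 2 * Sm P Q S - Sg P Q S) / 2 /\
  (snd c) ^ 2 * (Lm P Q S) ^ 2 = (cr P Q S) ^ 2 /\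
  0 <= snd c /\ 0 <= fst c <= 1/2 /\ fst c ^ 2 + snd c ^ 2 <= 1.
Proof.
  intros [Hc1 [Hc2 [f [[k [Hk Hf]] [a [b [d [Hp [Ha [Hb [Hd [H1 [H2 [H3 H4]]]]]]]]]]]]]].
  destruct c as [c1 c2]; simpl in *.
  assert (Eab : 1 = k^2 * d2 a b).
  { pose proof (Hf a b) as E. rewrite Ha, Hb in E.
    assert (E2 : dist (0,0) (1,0) ^2 = (k * dist a b)^2) by (rewrite E; reflexivity).
    rewrite dist_sq in E2. rewrite <- dist_sq. unfold d2 in E2; simpl in E2. nra. }
  assert (Ead : c1^2 + c2^2 = k^2 * d2 a d).
  { pose proof (Hf a d) as E. rewrite Ha, Hd in E.
    assert (E2 : dist (0,0) (c1,c2) ^2 = (k * dist a d)^2) by (rewrite E; reflexivity).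
    rewrite dist_sq in E2. rewrite <- dist_sq. unfold d2 in E2; simpl in E2. nra. }
  assert (Ebd : (1 - c1)^2 + c2^2 = k^2 * d2 b d).
  { pose proof (Hf b d) as E. rewrite Hb, Hd in E.
    assert (E2 : dist (1,0) (c1,c2) ^2 = (k * dist b d)^2) by (rewrite E; reflexivity).
    rewrite dist_sq in E2. rewrite <- dist_sq. unfold d2 in E2; simpl in E2. nra. }
  apply dist_le_d2 in H1. apply dist_le_d2 in H2. apply dist_le_d2 in H4.
  assert (Kx : c1 * d2 a b = (d2 a b + d2 a d - d2 b d) / 2).
  { assert (2*c1 - 1 = k^2 * (d2 a d - d2 b d)) by nra.
    assert ((2*c1 - 1) * d2 a b = (d2 a d - d2 b d)) by (rewrite H; nra).
    lra. }
  assert (Ky : c2^2 * (d2 a b)^2 = d2 a b * d2 a d - ((d2 a b + d2 a d - d2 b d) / 2)^2).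
  { rewrite <- Kx. assert (c2^2 = k^2 * d2 a d - c1^2) by lra. rewrite H.
    replace ((k ^ 2 * d2 a d - c1 ^ 2) * d2 a b ^ 2) with
      ((k^2 * d2 a b) * d2 a d * d2 a b - (c1 * d2 a b)^2) by ring.
    rewrite <- Eab. ring. }
  assert (Hb1 : c1^2 + c2^2 <= 1).
  { rewrite Ead, Eab. pose proof (pow2_ge_0 k). nra. }
  assert (Hcr : d2 a b * d2 a d - ((d2 a b + d2 a d - d2 b d) / 2)^2 = (cr P Q S)^2).
  { destruct a as [a1 a2], b as [b1 b2], d as [d1 d2'].
    destruct P as [p1 p2], Q as [q1 q2], S as [s1 s2].
    unfold d2, cr; simpl.
    destruct Hp as [[E1 [E2 E3]]|[[E1 [E2 E3]]|[[E1 [E2 E3]]|[[E1 [E2 E3]]|[[E1 [E2 E3]]|[E1 [E2 E3]]]]]]];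
    injection E1; injection E2; injection E3; intros; subst; field. }
  assert (HL : Lm P Q S = d2 a b /\ Sm P Q S = d2 a d /\ Sg P Q S = d2 a b + d2 a d + d2 b d).
  { unfold Lm, Sm, Sg.
    destruct Hp as [[E1 [E2 E3]]|[[E1 [E2 E3]]|[[E1 [E2 E3]]|[[E1 [E2 E3]]|[[E1 [E2 E3]]|[E1 [E2 E3]]]]]]];
    subst; repeat rewrite (d2_sym S P) in *; repeat rewrite (d2_sym S Q) in *;
    repeat rewrite (d2_sym Q P) in *;
    unfold Rmax, Rmin; repeat destruct Rle_dec; repeat split; lra. }
  destruct HL as [-> [-> ->]].
  repeat split; lra.

Qed.
Definition gmap (a b : pt) (s : R) (p : pt) : pt :=
  let u := fst b - fst a in let v := snd b - snd a in let N := u^2 + v^2 in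
  (((fst p - fst a) * u + (snd p - snd a) * v) / N,
   s * (-(fst p - fst a) * v + (snd p - snd a) * u) / N).

Lemma gmap_sim a b s : 0 < d2 a b -> s^2 = 1 -> similitude (gmap a b s).
Proof.
  intros HN Hs. exists (/ sqrt (d2 a b)).
  assert (Hq : 0 < sqrt (d2 a b)) by (apply sqrt_lt_R0; exact HN).
  split. { apply Rinv_0_lt_compat; exact Hq. }
  intros p q. unfold dist.
  assert (E : d2 (gmap a b s p) (gmap a b s q) = (/ sqrt (d2 a b)) ^ 2 * d2 p q).
  { assert (Eq : sqrt (d2 a b) ^ 2 = d2 a b).
    { rewrite <- Rsqr_pow2. apply Rsqr_sqrt. lra. }
    rewrite pow_inv, Eq.
    destruct a as [a1 a2], b as [b1 b2], p as [p1 p2], q as [q1 q2].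
    unfold d2, gmap in *; simpl in *.
    assert (Hs' : s = 1 \/ s = -1).
    { assert (HH : (s-1)*(s+1) = 0) by nra. apply Rmult_integral in HH; lra. }
    destruct Hs' as [-> | ->]; field; lra. }
  change (sqrt (d2 (gmap a b s p) (gmap a b s q)) = / sqrt (d2 a b) * sqrt (d2 p q)).
  rewrite E, sqrt_mult.
  - rewrite <- Rsqr_pow2, sqrt_Rsqr; [reflexivity|]. left; apply Rinv_0_lt_compat; exact Hq.
  - apply pow2_ge_0.
  - apply d2_nonneg.
Qed.

Lemma mul_pos_bound t N : 0 < N -> 0 <= t * N -> 0 <= t.
Proof. intros HN H. destruct (Rle_dec 0 t); [lra|]. assert (t * N < 0) by (apply Rmult_neg_pos; lra). lra. Qed.
Lemma mul_le_bound t N : 0 < N -> t * N <= N / 2 -> t <= 1/2.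
Proof. intros HN H. apply (Rmult_le_reg_r N); [lra|]. lra. Qed.

Lemma ex_sorted a b d P Q S : is_perm3 a b d P Q S -> 0 < d2 a b ->
  d2 a d <= d2 b d -> d2 b d <= d2 a b -> exists c, is_char_point P Q S c.
Proof.
  intros Hp HN H1 H2.
  set (s := if Rle_dec 0 (cr a b d) then 1 else -1).
  assert (Hs : s^2 = 1) by (unfold s; destruct Rle_dec; ring).
  assert (Hsc : 0 <= s * cr a b d) by (unfold s; destruct Rle_dec; lra).
  exists (gmap a b s d).
  assert (Hdot : fst (gmap a b s d) * d2 a b = (d2 a b + d2 a d - d2 b d) / 2).
  { destruct a as [a1 a2], b as [b1 b2], d as [d1 d3]. unfold gmap, d2 in *; simpl in *.
    field. lra. }
  assert (Hsnd : snd (gmap a b s d) * d2 a b = s * cr a b d).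
  { destruct a as [a1 a2], b as [b1 b2], d as [d1 d3]. unfold gmap, d2, cr in *; simpl in *.
    field. lra. }
  split; [split|split].
  - apply (mul_pos_bound _ (d2 a b)); [lra|]. rewrite Hdot. pose proof (d2_nonneg a d). lra.
  - apply (mul_le_bound _ (d2 a b)); [lra|]. rewrite Hdot. lra.
  - apply (mul_pos_bound _ (d2 a b)); [lra|]. rewrite Hsnd. lra.
  - exists (gmap a b s). split. { apply gmap_sim; assumption. }
    exists a, b, d. split; [exact Hp|].
    split.
    { destruct a as [a1 a2], b as [b1 b2]. unfold gmap, d2 in *; simpl in *.
      f_equal; field; lra. }
    split.
    { destruct a as [a1 a2], b as [b1 b2]. unfold gmap, d2 in *; simpl in *.
      f_equal; field; lra. }
    split; [reflexivity|].
    repeat split; apply d2_le_dist; try lra.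

Qed.

Ltac perm_tac := unfold is_perm3;
  repeat first [ left; split; [reflexivity|split; reflexivity] | right ];
  try (split; [reflexivity|split; reflexivity]).

Lemma Lm_pos_ex P Q S : 0 < Lm P Q S -> exists c, is_char_point P Q S c.
Proof.
  intro HL. unfold Lm in HL.
  pose proof (d2_sym Q P). pose proof (d2_sym S P). pose proof (d2_sym S Q).
  destruct (Rle_dec (d2 P Q) (d2 Q S)); destruct (Rle_dec (d2 Q S) (d2 P S)); destruct (Rle_dec (d2 P Q) (d2 P S)).
  all: first
    [ apply (ex_sorted P Q S P Q S); [perm_tac | unfold Rmax in *; repeat destruct Rle_dec; lra ..]
    | apply (ex_sorted P S Q P Q S); [perm_tac | unfold Rmax in *; repeat destruct Rle_dec; lra ..]
    | apply (ex_sorted Q P S P Q S); [perm_tac | unfold Rmax in *; repeat destruct Rle_dec; lra ..]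
    | apply (ex_sorted Q S P P Q S); [perm_tac | unfold Rmax in *; repeat destruct Rle_dec; lra ..]
    | apply (ex_sorted S P Q P Q S); [perm_tac | unfold Rmax in *; repeat destruct Rle_dec; lra ..]
    | apply (ex_sorted S Q P P Q S); [perm_tac | unfold Rmax in *; repeat destruct Rle_dec; lra ..] ].
Qed.

Lemma ratio_bound L L' a a' e n : 0 < L -> L <= L' -> L' <= L + e -> 0 <= a -> a <= n*L ->
  a <= a' -> a' <= a + 3*e -> 0 <= e -> 0 <= n ->
  Rabs (a'/L' - a/L) <= (n+3)*e/L.
Proof.
  intros. set (D := a'/L' - a/L).
  assert (HX : D * (L*L') = a'*L - a*L') by (unfold D; field; lra).
  assert (B1 : a'*L - a*L' <= (n+3)*e*L) by nra.
  assert (B2 : -((n+3)*e*L) <= a'*L - a*L') by nra.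
  assert (HA : Rabs D * (L*L') <= (n+3)*e*L).
  { rewrite <- (Rabs_pos_eq (L*L')) by nra. rewrite <- Rabs_mult, HX.
    apply Rabs_le; lra. }
  assert (HA2 : Rabs D * L' <= (n+3)*e).
  { apply (Rmult_le_reg_r L); [lra|]. nra. }
  assert (HA3 : Rabs D * L <= (n+3)*e).
  { pose proof (Rabs_pos D). nra. }
  apply (Rmult_le_reg_r L); [lra|]. unfold Rdiv. rewrite Rmult_assoc, Rinv_l by lra. lra.
Qed.

Lemma maxmin_mono t1 t2 t3 e1 e2 e3 E :
  0 <= e1 <= E -> 0 <= e2 <= E -> 0 <= e3 <= E ->
  Rmax (Rmax t1 t2) t3 <= Rmax (Rmax (t1+e1) (t2+e2)) (t3+e3) <= Rmax (Rmax t1 t2) t3 + E /\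
  Rmin (Rmin t1 t2) t3 <= Rmin (Rmin (t1+e1) (t2+e2)) (t3+e3) <= Rmin (Rmin t1 t2) t3 + E /\
  Rmin (Rmin t1 t2) t3 <= Rmax (Rmax t1 t2) t3 /\
  t1 + t2 + t3 <= 3 * Rmax (Rmax t1 t2) t3.
Proof. intros. unfold Rmax, Rmin; repeat destruct Rle_dec; repeat split; lra. Qed.

Lemma y_le1 P Q S x y : is_char_point P Q S (x, y) -> 0 <= x <= 1/2 /\ 0 <= y <= 1.
Proof.
  intro H. pose proof H as H0. destruct H0 as [H1 [H2 _]]. apply char_spec in H. simpl in *.
  destruct H as [_ [_ [_ [_ H]]]]. split; [lra|]. split; [lra|]. nra.
Qed.

Lemma cp_spec P Q S : 0 < Lm P Q S -> is_char_point P Q S (char_point P Q S).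
Proof.
  intro H. unfold char_point. apply epsilon_spec. apply Lm_pos_ex; exact H.
Qed.

Lemma sub_bound P Q T P0 Q0 T0 y :
 0 <= y <= 1 ->
 fst P = fst P0 -> fst Q = fst Q0 -> fst T = fst T0 ->
 snd P0 = 0 -> snd Q0 = 0 -> snd T0 = 0 ->
 (snd P - snd Q)^2 <= y^2 -> (snd Q - snd T)^2 <= y^2 -> (snd P - snd T)^2 <= y^2 ->
 1/16 <= Lm P0 Q0 T0 ->
 Rabs (cr P Q T) <= y/6 ->
 Rmax (Rabs (fst (char_point P Q T) - fst (char_point P0 Q0 T0)))
      (Rabs (snd (char_point P Q T))) <= 112 * y.
Proof.
  intros Hy E1 E2 E3 Z1 Z2 Z3 F1 F2 F3 HL Hcr.
  assert (D1 : d2 P Q = d2 P0 Q0 + (snd P - snd Q)^2) by (unfold d2; rewrite E1, E2, Z1, Z2; ring).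
  assert (D2 : d2 Q T = d2 Q0 T0 + (snd Q - snd T)^2) by (unfold d2; rewrite E3, E2, Z3, Z2; ring).
  assert (D3 : d2 P T = d2 P0 T0 + (snd P - snd T)^2) by (unfold d2; rewrite E1, E3, Z1, Z3; ring).
  pose proof (pow2_ge_0 (snd P - snd Q)). pose proof (pow2_ge_0 (snd Q - snd T)).
  pose proof (pow2_ge_0 (snd P - snd T)).
  destruct (maxmin_mono (d2 P0 Q0) (d2 Q0 T0) (d2 P0 T0) _ _ _ (y^2)
     (conj H F1) (conj H0 F2) (conj H1 F3)) as [M1 [M2 [M3 M4]]].
  rewrite <- D1, <- D2, <- D3 in M1, M2.
  fold (Lm P Q T) (Sm P Q T) in M1, M2. fold (Lm P0 Q0 T0) (Sm P0 Q0 T0) in M1, M2, M3, M4.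
  assert (HS : Sg P0 Q0 T0 <= Sg P Q T <= Sg P0 Q0 T0 + 3 * y^2) by (unfold Sg; lra).
  assert (HS3 : Sg P0 Q0 T0 <= 3 * Lm P0 Q0 T0) by (unfold Sg; lra).
  assert (HS0 : 0 <= Sg P0 Q0 T0) by (unfold Sg; pose proof (d2_nonneg P0 Q0);
     pose proof (d2_nonneg Q0 T0); pose proof (d2_nonneg P0 T0); lra).
  assert (HSm0 : 0 <= Sm P0 Q0 T0) by (unfold Sm, Rmin; pose proof (d2_nonneg P0 Q0);
     pose proof (d2_nonneg Q0 T0); pose proof (d2_nonneg P0 T0); repeat destruct Rle_dec; lra).
  pose proof (char_spec _ _ _ _ (cp_spec P Q T ltac:(lra))) as [X1 [Y1 [Y1p _]]].
  pose proof (char_spec _ _ _ _ (cp_spec P0 Q0 T0 ltac:(lra))) as [X0 _].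
  set (L := Lm P Q T) in *. set (L0 := Lm P0 Q0 T0) in *.
  set (c := char_point P Q T) in *. set (c0 := char_point P0 Q0 T0) in *.
  assert (Hx : fst c = 1 + Sm P Q T / L - / 2 * (Sg P Q T / L)).
  { apply (Rmult_eq_reg_r L); [|lra]. rewrite X1. field. lra. }
  assert (Hx0 : fst c0 = 1 + Sm P0 Q0 T0 / L0 - / 2 * (Sg P0 Q0 T0 / L0)).
  { apply (Rmult_eq_reg_r L0); [|lra]. rewrite X0. field. lra. }
  assert (R1 : Rabs (Sm P Q T / L - Sm P0 Q0 T0 / L0) <= (1+3) * y^2 / L0).
  { pose proof (pow2_ge_0 y). apply ratio_bound; lra. }
  assert (R2 : Rabs (Sg P Q T / L - Sg P0 Q0 T0 / L0) <= (3+3) * y^2 / L0).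
  { pose proof (pow2_ge_0 y). apply ratio_bound; lra. }
  assert (Hdx : Rabs (fst c - fst c0) <= 7 * y^2 / L0).
  { rewrite Hx, Hx0.
    replace (1 + Sm P Q T / L - / 2 * (Sg P Q T / L) - (1 + Sm P0 Q0 T0 / L0 - / 2 * (Sg P0 Q0 T0 / L0)))
      with ((Sm P Q T / L - Sm P0 Q0 T0 / L0) + (-/2) * (Sg P Q T / L - Sg P0 Q0 T0 / L0)) by ring.
    eapply Rle_trans; [apply Rabs_triang|]. rewrite Rabs_mult.
    rewrite (Rabs_left (-/2)) by lra.
    unfold Rdiv in *. lra. }
  assert (HL0 : 7 * y^2 / L0 <= 112 * y).
  { apply (Rmult_le_reg_r L0); [lra|]. unfold Rdiv. rewrite Rmult_assoc, Rinv_l by lra. nra. }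
  assert (Hdy : snd c <= 112 * y).
  { assert (Hc : snd c * L <= y / 6).
    { assert (0 <= snd c * L) by nra.
      assert ((snd c * L)^2 <= (y/6)^2).
      { replace ((snd c * L)^2) with (snd c ^2 * L^2) by ring. rewrite Y1.
        rewrite <- Rsqr_pow2, <- (Rsqr_pow2 (y/6)). rewrite Rsqr_abs.
        apply Rsqr_incr_1; [exact Hcr | apply Rabs_pos | lra]. }
      nra. }
    nra. }
  apply Rmax_lub; [lra|]. rewrite Rabs_pos_eq by exact Y1p. exact Hdy.
Qed.

Lemma d2_zero p q : d2 p q <= 0 -> p = q.
Proof.
  destruct p as [p1 p2], q as [q1 q2]. unfold d2; simpl. intro H.
  pose proof (pow2_ge_0 (p1 - q1)). pose proof (pow2_ge_0 (p2 - q2)).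
  assert (p1 = q1) by nra. assert (p2 = q2) by nra. subst; reflexivity.
Qed.

Lemma tri_Lm P Q S : is_triangle P Q S -> 0 < Lm P Q S.
Proof.
  intro Ht. destruct (Rlt_dec 0 (Lm P Q S)) as [|Hn]; [assumption|]. exfalso. apply Ht.
  unfold Lm in Hn.
  assert (d2 P Q <= 0) by (unfold Rmax in Hn; repeat destruct Rle_dec; lra).
  assert (d2 Q S <= 0) by (unfold Rmax in Hn; repeat destruct Rle_dec; lra).
  split; apply d2_zero; assumption.
Qed.

Theorem lemma7 :
  exists K : R, 0 < K /\
    forall (i : nat), (1 <= i <= 6)%nat ->
    forall x y : R, in_D (x, y) ->
      Rmax (Rabs (x_i i x y - z_i i x)) (Rabs (y_i i x y)) <= K * y.
Proof.
  exists 112. split; [lra|].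
  intros i Hi x y [P [Q [S [Ht Hc]]]].
  pose proof (cp_spec P Q S (tri_Lm P Q S Ht)) as Hs. rewrite <- Hc in Hs.
  apply y_le1 in Hs. destruct Hs as [Hx Hy].
  unfold x_i, z_i, y_i, char_sub.
  destruct i as [|[|[|[|[|[|[|i]]]]]]]; try lia; simpl subtri; cbv zeta;
  apply sub_bound; simpl; try lra; try nra;
  try (unfold Lm, d2; simpl; unfold Rmax; repeat destruct Rle_dec; nra);
  try (unfold cr; simpl; apply Rabs_le; split; nra).
Qed.
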